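(* Let $ABC$ be a triangle with circumcenter $O$, let $l$ be a line in its plane, and let $T$ be the foot of the perpendicular from $O$ to $l$. Let $R$ and $S$ be variable points on $l$ satisfying $TS = TR$, and let $S', R'$ be the isogonal conjugates of $S, R$ with respect to $ABC$. Then, as $S, R$ vary on $l$, the line $S'R'$ remains parallel to a fixed line. *)

(* Defs.v *)
From HB Require Import structures.
From mathcomp Require Import all_boot all_order all_algebra.
Set Implicit Arguments. Unset Strict Implicit. Unset Printing Implicit Defensive.
Import Order.TTheory GRing.Theory Num.Theory.
Local Open Scope ring_scope.

Section Plane.
Variable R : rcfType.

Definition pt := (R * R)%type.

Definition vadd (u v : pt) : pt := (u.1 + v.1, u.2 + v.2).
Definition vsub (u v : pt) : pt := (u.1 - v.1, u.2 - v.2).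
Definition vscale (a : R) (u : pt) : pt := (a * u.1, a * u.2).
Definition dot (u v : pt) : R := u.1 * v.1 + u.2 * v.2.
Definition cross (u v : pt) : R := u.1 * v.2 - u.2 * v.1.
Definition vnorm (u : pt) : R := Num.sqrt (dot u u).
Definition dist (P Q : pt) : R := vnorm (vsub P Q).

Definition on_line (P0 v X : pt) : Prop := cross (vsub X P0) v = 0.

Definition triangle (A B C : pt) : Prop := cross (vsub B A) (vsub C A) <> 0.

Definition circumcenter (A B C O : pt) : Prop :=
  dist O A = dist O B /\ dist O B = dist O C.

Definition on_sidelines (A B C P : pt) : Prop :=
  on_line A (vsub B A) P \/ on_line B (vsub C B) P \/ on_line C (vsub A C) P.

Definition bisector_dir (A B C : pt) : pt :=
  vadd (vscale (vnorm (vsub B A))^-1 (vsub B A))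
       (vscale (vnorm (vsub C A))^-1 (vsub C A)).

Definition reflect_dir (w d : pt) : pt :=
  vsub (vscale (2 * dot d w / dot w w) w) d.

Definition on_isogonal_line (A B C P X : pt) : Prop :=
  on_line A (reflect_dir (bisector_dir A B C) (vsub P A)) X.

Definition isogonal_conjugate (A B C P P' : pt) : Prop :=
  on_isogonal_line A B C P P' /\ on_isogonal_line B C A P P' /\
  on_isogonal_line C A B P P'.

End Plane.

(* Main.v *)
Require Import Defs.
From mathcomp Require Import all_boot all_order all_algebra.
From mathcomp Require Import ring lra.
Import Order.TTheory GRing.Theory Num.Theory.
Local Open Scope ring_scope.
Set Implicit Arguments. Unset Strict Implicit. Unset Printing Implicit Defensive.

Section S.
Variable R : rcfType.

Lemma reflect_key (u1 u2 w1 w2 nu nw p q : R) :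
  0 < nu -> 0 < nw -> nu ^+ 2 = u1 ^+ 2 + u2 ^+ 2 -> nw ^+ 2 = w1 ^+ 2 + w2 ^+ 2 ->
  u1 * w2 - u2 * w1 != 0 ->
  reflect_dir (nu^-1 * u1 + nw^-1 * w1, nu^-1 * u2 + nw^-1 * w2)
              (p * u1 + q * w1, p * u2 + q * w2) =
  (q * nw / nu * u1 + p * nu / nw * w1, q * nw / nu * u2 + p * nu / nw * w2).
Proof.
move=> nu0 nw0 hu hw hD.
have nu0' : nu != 0 by rewrite gt_eqF.
have nw0' : nw != 0 by rewrite gt_eqF.
have two0 : (2 : R) != 0 by rewrite pnatr_eq0.
have he : nu * nw + (u1 * w1 + u2 * w2) != 0.
  apply/eqP => h.
  have h2 : (nu * nw) ^+ 2 = (u1 * w1 + u2 * w2) ^+ 2 + (u1 * w2 - u2 * w1) ^+ 2.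
    by rewrite exprMn hu hw; ring.
  have he' : u1 * w1 + u2 * w2 = - (nu * nw).
    by apply/eqP; rewrite -subr_eq0 opprK addrC h.
  move: h2; rewrite he' sqrrN => h2.
  have : (u1 * w2 - u2 * w1) ^+ 2 == 0.
    by rewrite -(inj_eq (addrI ((nu * nw) ^+ 2))) addr0 -h2.
  by rewrite sqrf_eq0 (negbTE hD).
set e := u1 * w1 + u2 * w2 in he.
have hkk : dot (nu^-1 * u1 + nw^-1 * w1, nu^-1 * u2 + nw^-1 * w2)
               (nu^-1 * u1 + nw^-1 * w1, nu^-1 * u2 + nw^-1 * w2)
           = 2 * (nu * nw + e) / (nu * nw).
  have -> : dot (nu^-1 * u1 + nw^-1 * w1, nu^-1 * u2 + nw^-1 * w2)
               (nu^-1 * u1 + nw^-1 * w1, nu^-1 * u2 + nw^-1 * w2)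
     = 2 * (nu * nw + e) / (nu * nw) + (u1 ^+ 2 + u2 ^+ 2 - nu ^+ 2) / nu ^+ 2
       + (w1 ^+ 2 + w2 ^+ 2 - nw ^+ 2) / nw ^+ 2.
    by rewrite /dot /e /=; field; rewrite ?nu0' ?nw0' ?he ?two0.
  by rewrite -hu -hw !subrr !mul0r !addr0.
have hdk : dot (p * u1 + q * w1, p * u2 + q * w2)
               (nu^-1 * u1 + nw^-1 * w1, nu^-1 * u2 + nw^-1 * w2)
           = (nu * nw + e) * (p * nu + q * nw) / (nu * nw).
  have -> : dot (p * u1 + q * w1, p * u2 + q * w2)
               (nu^-1 * u1 + nw^-1 * w1, nu^-1 * u2 + nw^-1 * w2)
     = (nu * nw + e) * (p * nu + q * nw) / (nu * nw)
       + p * (u1 ^+ 2 + u2 ^+ 2 - nu ^+ 2) / nu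
       + q * (w1 ^+ 2 + w2 ^+ 2 - nw ^+ 2) / nw.
    by rewrite /dot /e /=; field; rewrite ?nu0' ?nw0' ?he ?two0.
  by rewrite -hu -hw !subrr !mulr0 !mul0r !addr0.
rewrite /reflect_dir hdk hkk /vsub /vscale /=.
by congr pair; field; rewrite ?nu0' ?nw0' ?he ?two0.
Qed.


Lemma sqrt_pos_facts {u1 u2 w1 w2 : R} : u1 * w2 - u2 * w1 != 0 ->
  (0 < Num.sqrt (u1 * u1 + u2 * u2)) /\ (Num.sqrt (u1 * u1 + u2 * u2) ^+ 2 = u1 ^+ 2 + u2 ^+ 2).
Proof.
move=> hD.
have h0 : 0 <= u1 * u1 + u2 * u2 by rewrite -!expr2 addr_ge0 ?sqr_ge0.
split; last by rewrite sqr_sqrtr // !expr2.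
rewrite sqrtr_gt0 lt_def h0 andbT.
rewrite -!expr2 paddr_eq0 ?sqr_ge0 // !sqrf_eq0.
apply/negP => /andP [/eqP h1 /eqP h2]; move: hD; rewrite h1 h2.
by rewrite !mul0r subrr eqxx.
Qed.

Lemma iso_eq (X Y Z P P' : pt R) (p q p' q' : R) :
  cross (vsub Y X) (vsub Z X) != 0 ->
  vsub P X = (p * (vsub Y X).1 + q * (vsub Z X).1, p * (vsub Y X).2 + q * (vsub Z X).2) ->
  vsub P' X = (p' * (vsub Y X).1 + q' * (vsub Z X).1, p' * (vsub Y X).2 + q' * (vsub Z X).2) ->
  on_isogonal_line X Y Z P P' ->
  p' * p * dot (vsub Y X) (vsub Y X) = q' * q * dot (vsub Z X) (vsub Z X).
Proof.
rewrite /on_isogonal_line /on_line /bisector_dir => + -> ->.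
rewrite /vnorm.
case: (vsub Y X) => u1 u2; case: (vsub Z X) => w1 w2.
rewrite /vadd /vscale => hD; rewrite /cross /= in hD.
have [nu0 hu] := sqrt_pos_facts hD.
have hD' : w1 * u2 - w2 * u1 != 0.
  by apply: contra hD => /eqP h; rewrite -oppr_eq0 -h; apply/eqP; ring.
have [nw0 hw] := sqrt_pos_facts hD'.
rewrite reflect_key //; rewrite /cross /=.
set nu := Num.sqrt _ in nu0 hu *; set nw := Num.sqrt _ in nw0 hw *.
have nu0' : nu != 0 by rewrite gt_eqF.
have nw0' : nw != 0 by rewrite gt_eqF.
move=> h.
have : (p' * p * nu / nw - q' * q * nw / nu) * (u1 * w2 - u2 * w1) = 0.
  by rewrite -h; field; rewrite ?nu0' ?nw0'.
move/eqP; rewrite mulf_eq0 (negbTE hD) orbF subr_eq0 => /eqP h2.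
have : p' * p * (nu ^+ 2) = q' * q * (nw ^+ 2).
  have e1 : p' * p * nu ^+ 2 = (p' * p * nu / nw) * (nu * nw) by field.
  have e2 : q' * q * nw ^+ 2 = (q' * q * nw / nu) * (nu * nw) by field.
  by rewrite e1 e2 h2.
by rewrite hu hw !expr2.
Qed.

End S.


Section Alg.
Variable R : rcfType.
Variables (T2 T3 v2 v3 g11 g12 g22 : R).

Definition T1 : R := 1 - T2 - T3.
Definition v1 : R := - v2 - v3.
Definition a2 : R := g11 - 2 * g12 + g22.
Definition Q1 (s : R) := a2 * (T2 + s * v2) * (T3 + s * v3).
Definition Q2 (s : R) := g22 * (T3 + s * v3) * (T1 + s * v1).
Definition Q3 (s : R) := g11 * (T1 + s * v1) * (T2 + s * v2).
Definition sig (s : R) := Q1 s + Q2 s + Q3 s.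
Definition q10 := a2 * (T2 * T3).
Definition q11 := a2 * (T2 * v3 + v2 * T3).
Definition q12 := a2 * (v2 * v3).
Definition q20 := g22 * (T3 * T1).
Definition q21 := g22 * (T3 * v1 + v3 * T1).
Definition q22 := g22 * (v3 * v1).
Definition q30 := g11 * (T1 * T2).
Definition q31 := g11 * (T1 * v2 + v1 * T2).
Definition q32 := g11 * (v1 * v2).
Definition s0 := q10 + q20 + q30.
Definition s1 := q11 + q21 + q31.
Definition s2 := q12 + q22 + q32.
Definition E2 := q21 * s0 - q20 * s1.
Definition E3 := q31 * s0 - q30 * s1.
Definition F2 := q21 * s2 - q22 * s1.
Definition F3 := q31 * s2 - q32 * s1.
Definition Kc := v2 * g11 + v3 * g22 - 2 * (T2 * (v2 * g11 + v3 * g12) + T3 * (v2 * g12 + v3 * g22)).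
Definition Pc := T3*v2^+2*v3 - T3^+2*v2^+2*v3 + T3^+2*v2^+3 - T3^+3*v2^+3 - T2*v2*v3^+2
  + 2*T2*T3*v2*v3^+2 - 2*T2*T3*v2^+2*v3 + 3*T2*T3^+2*v2^+2*v3 - T2^+2*v3^+3
  + T2^+2*v2*v3^+2 - 3*T2^+2*T3*v2*v3^+2 + T2^+3*v3^+3.

Ltac unf := rewrite /E2 /E3 /F2 /F3 /s0 /s1 /s2 /q10 /q11 /q12 /q20 /q21 /q22 /q30 /q31 /q32
  /sig /Q1 /Q2 /Q3 /a2 /T1 /v1 /Kc /Pc.

Lemma w2_id s : Q2 s * sig (- s) - Q2 (- s) * sig s = 2 * s * (E2 + s ^+ 2 * F2).
Proof. unf; ring. Qed.
Lemma w3_id s : Q3 s * sig (- s) - Q3 (- s) * sig s = 2 * s * (E3 + s ^+ 2 * F3).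
Proof. unf; ring. Qed.
Lemma key_id : E2 * F3 - E3 * F2 = - (a2 * g11 * g22) * Pc * Kc.
Proof. unf; ring. Qed.


Lemma delta_exists : Kc = 0 -> exists d1 d2 : R,
  ((d1 != 0) || (d2 != 0)) /\ forall s, (E2 + s ^+ 2 * F2) * d2 = (E3 + s ^+ 2 * F3) * d1.
Proof.
move=> hK.
have hk : E2 * F3 - E3 * F2 = 0 by rewrite key_id hK mulr0.
case: (boolP ((E2 != 0) || (E3 != 0))) => hE.
  exists E2, E3; split => // s.
  have -> : (E2 + s ^+ 2 * F2) * E3 = (E3 + s ^+ 2 * F3) * E2 - s ^+ 2 * (E2 * F3 - E3 * F2).
    by ring.
  by rewrite hk mulr0 subr0.
move: hE; rewrite negb_or !negbK => /andP [/eqP -> /eqP ->].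
case: (boolP ((F2 != 0) || (F3 != 0))) => hF.
  by exists F2, F3; split => // s; ring.
move: hF; rewrite negb_or !negbK => /andP [/eqP -> /eqP ->].
by exists 1, 0; split; [rewrite oner_eq0 | move=> s; ring].
Qed.

Lemma final_alg s xS yS xR yR d1 d2 :
  sig s != 0 -> sig (- s) != 0 ->
  xS * sig s = Q2 s -> yS * sig s = Q3 s ->
  xR * sig (- s) = Q2 (- s) -> yR * sig (- s) = Q3 (- s) ->
  (E2 + s ^+ 2 * F2) * d2 = (E3 + s ^+ 2 * F3) * d1 ->
  (xS - xR) * d2 = (yS - yR) * d1.
Proof.
move=> h1 h2 hxS hyS hxR hyR hd.
have hs : sig s * sig (- s) != 0 by rewrite mulf_neq0.
apply: (mulIf hs).
have ex : (xS - xR) * (sig s * sig (- s)) = 2 * s * (E2 + s ^+ 2 * F2).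
  rewrite -w2_id -hxS -hxR; ring.
have ey : (yS - yR) * (sig s * sig (- s)) = 2 * s * (E3 + s ^+ 2 * F3).
  rewrite -w3_id -hyS -hyR; ring.
rewrite mulrAC ex [(yS - yR) * d1 * _]mulrAC ey.
by rewrite -[LHS]mulrA hd mulrA.
Qed.

End Alg.


Section Geo.
Variable R : rcfType.
Implicit Types A B C P Q O T S v : pt R.

Definition Dl A B C := cross (vsub B A) (vsub C A).
Definition cx A B C P := cross (vsub P A) (vsub C A) / Dl A B C.
Definition cy A B C P := cross (vsub B A) (vsub P A) / Dl A B C.
Definition vx A B C v := cross v (vsub C A) / Dl A B C.
Definition vy A B C v := cross (vsub B A) v / Dl A B C.

Ltac dstr := rewrite /cx /cy /vx /vy /Dl /cross /vsub /dot /=.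

Lemma decompA A B C P : Dl A B C != 0 ->
  vsub P A = (cx A B C P * (vsub B A).1 + cy A B C P * (vsub C A).1,
              cx A B C P * (vsub B A).2 + cy A B C P * (vsub C A).2).
Proof.
case: A => a1 a2; case: B => b1 b2; case: C => c1 c2; case: P => p1 p2.
by dstr => hD; congr pair; field; rewrite ?hD.
Qed.

Lemma decompB A B C P : Dl A B C != 0 ->
  vsub P B = (cy A B C P * (vsub C B).1 + (1 - cx A B C P - cy A B C P) * (vsub A B).1,
              cy A B C P * (vsub C B).2 + (1 - cx A B C P - cy A B C P) * (vsub A B).2).
Proof.
case: A => a1 a2; case: B => b1 b2; case: C => c1 c2; case: P => p1 p2.
by dstr => hD; congr pair; field; rewrite ?hD.
Qed.

Lemma DlB A B C : cross (vsub C B) (vsub A B) = Dl A B C.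
Proof.
case: A => a1 a2; case: B => b1 b2; case: C => c1 c2; dstr; ring.
Qed.

Lemma side_ids A B C P : Dl A B C != 0 ->
  [/\ cross (vsub P A) (vsub B A) = - cy A B C P * Dl A B C,
      cross (vsub P B) (vsub C B) = - (1 - cx A B C P - cy A B C P) * Dl A B C &
      cross (vsub P C) (vsub A C) = - cx A B C P * Dl A B C].
Proof.
case: A => a1 a2; case: B => b1 b2; case: C => c1 c2; case: P => p1 p2.
by dstr => hD; split; field; rewrite ?hD.
Qed.

Lemma coords_nz A B C P : Dl A B C != 0 -> ~ on_sidelines A B C P ->
  [/\ cx A B C P != 0, cy A B C P != 0 & 1 - cx A B C P - cy A B C P != 0].
Proof.
move=> hD hs; have [e1 e2 e3] := @side_ids A B C P hD.
split; apply/eqP => h; apply: hs.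
- by right; right; rewrite /on_line e3 h oppr0 mul0r.
- by left; rewrite /on_line e1 h oppr0 mul0r.
- by right; left; rewrite /on_line e2 h oppr0 mul0r.
Qed.

Lemma cross_decomp A B C P Q d1 d2 : Dl A B C != 0 ->
  cross (vsub P Q) (d1 * (vsub B A).1 + d2 * (vsub C A).1, d1 * (vsub B A).2 + d2 * (vsub C A).2)
  = ((cx A B C P - cx A B C Q) * d2 - (cy A B C P - cy A B C Q) * d1) * Dl A B C.
Proof.
case: A => a1 a2; case: B => b1 b2; case: C => c1 c2; case: P => p1 p2; case: Q => q1 q2.
by dstr => hD; field; rewrite ?hD.
Qed.

Lemma eq_from_coords A B C P Q : Dl A B C != 0 ->
  cx A B C P = cx A B C Q -> cy A B C P = cy A B C Q -> P = Q.
Proof.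
move=> hD h1 h2.
have := @decompA A B C P hD; have := @decompA A B C Q hD; rewrite h1 h2 => <-; clear h1 h2.
case: P => p1 p2; case: Q => q1 q2; rewrite /vsub /= => -[e1 e2].
have -> : p1 = q1 by rewrite -(subrK A.1 p1) e1 subrK.
have -> : p2 = q2 by rewrite -(subrK A.2 p2) e2 subrK.
by [].
Qed.


Lemma conj_alg (x y x' y' a2 b2 c2 : R) : x != 0 -> y != 0 -> 1 - x - y != 0 ->
  a2 != 0 -> c2 != 0 ->
  x' * x * c2 = y' * y * b2 -> y' * y * a2 = (1 - x' - y') * (1 - x - y) * c2 ->
  let sg := a2 * x * y + b2 * y * (1 - x - y) + c2 * (1 - x - y) * x in
  [/\ sg != 0, x' * sg = b2 * y * (1 - x - y) & y' * sg = c2 * (1 - x - y) * x].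
Proof.
move=> hx hy hal ha hc hA hB sg.
have hal' : (1 - x' - y') * sg = a2 * x * y.
  have e : c2 * ((1 - x' - y') * sg - a2 * x * y) =
    - (a2 * y) * (x' * x * c2 - y' * y * b2)
    - (b2 * y + c2 * x) * (y' * y * a2 - (1 - x' - y') * (1 - x - y) * c2).
    by rewrite /sg; ring.
  move: e; rewrite hA hB !subrr !mulr0 subrr => /eqP.
  by rewrite mulf_eq0 (negbTE hc) /= subr_eq0 => /eqP.
have hsg : sg != 0.
  apply/eqP => h0; move: hal'; rewrite h0 mulr0 => /eqP.
  by rewrite eq_sym !mulf_eq0 (negbTE ha) (negbTE hx) (negbTE hy).
have hy' : y' * sg = c2 * (1 - x - y) * x.
  apply: (@mulfI _ (a2 * y)); first by rewrite mulf_neq0.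
  have -> : a2 * y * (y' * sg) = sg * (y' * y * a2) by ring.
  rewrite hB.
  have -> : sg * ((1 - x' - y') * (1 - x - y) * c2) = c2 * (1 - x - y) * ((1 - x' - y') * sg)
    by ring.
  by rewrite hal'; ring.
split => //.
apply: (@mulfI _ (c2 * x)); first by rewrite mulf_neq0.
have -> : c2 * x * (x' * sg) = sg * (x' * x * c2) by ring.
rewrite hA.
have -> : sg * (y' * y * b2) = b2 * y * (y' * sg) by ring.
by rewrite hy'; ring.
Qed.

Lemma dot0 (u : pt R) : dot u u = 0 -> u = (0, 0).
Proof.
case: u => u1 u2; rewrite /dot /= => /eqP.
rewrite -!expr2 paddr_eq0 ?sqr_ge0 // !sqrf_eq0 => /andP [/eqP -> /eqP ->] //.
Qed.

Lemma dot_nz (u w : pt R) : cross u w != 0 -> dot u u != 0 /\ dot w w != 0.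
Proof.
move=> h; split; apply/eqP => /dot0 e; move: h; rewrite e /cross /=;
  by case: (u) => ? ?; case: (w) => ? ?; rewrite /= ?mul0r ?mulr0 subrr eqxx.
Qed.

End Geo.


Section Geo2.
Variable R : rcfType.
Implicit Types A B C P Q O T S v : pt R.

Lemma dotBA A B : dot (vsub A B) (vsub A B) = dot (vsub B A) (vsub B A).
Proof. case: A => ? ?; case: B => ? ?; rewrite /dot /vsub /=; ring. Qed.

Lemma conj_coords A B C P P' : Dl A B C != 0 -> ~ on_sidelines A B C P ->
  isogonal_conjugate A B C P P' ->
  let x := cx A B C P in let y := cy A B C P in
  let a2 := dot (vsub C B) (vsub C B) in let b2 := dot (vsub C A) (vsub C A) in
  let c2 := dot (vsub B A) (vsub B A) in
  let sg := a2 * x * y + b2 * y * (1 - x - y) + c2 * (1 - x - y) * x in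
  [/\ sg != 0, cx A B C P' * sg = b2 * y * (1 - x - y) & cy A B C P' * sg = c2 * (1 - x - y) * x].
Proof.
move=> hD hs [iA [iB _]] x y a2 b2 c2 sg.
have [hx hy hal] := coords_nz hD hs.
have hA := iso_eq hD (decompA P hD) (decompA P' hD) iA.
have hDB : cross (vsub C B) (vsub A B) != 0 by rewrite DlB.
have hB := iso_eq hDB (decompB P hD) (decompB P' hD) iB.
rewrite [dot (vsub A B) _]dotBA in hB.
have [ha _] := dot_nz hDB.
have [hc _] := dot_nz hD.
exact: (conj_alg hx hy hal ha hc hA hB).
Qed.


Lemma a2_eq A B C : dot (vsub C B) (vsub C B) =
  dot (vsub B A) (vsub B A) - 2 * dot (vsub B A) (vsub C A) + dot (vsub C A) (vsub C A).
Proof. case: A => ? ?; case: B => ? ?; case: C => ? ?; rewrite /dot /vsub /=; ring. Qed.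

Lemma coords_shift A B C S T v s : Dl A B C != 0 -> vsub S T = (s * v.1, s * v.2) ->
  cx A B C S = cx A B C T + s * vx A B C v /\ cy A B C S = cy A B C T + s * vy A B C v.
Proof.
case: A => a1 a2; case: B => b1 b2; case: C => c1 c2; case: S => p1 p2; case: T => t1 t2.
case: v => w1 w2.
rewrite /cx /cy /vx /vy /Dl /cross /vsub /= => hD [e1 e2].
have h1 : p1 = t1 + s * w1 by rewrite -e1; ring.
have h2 : p2 = t2 + s * w2 by rewrite -e2; ring.
by subst p1 p2; split; field; rewrite ?hD.
Qed.

Lemma conj_param A B C S S' T v s : Dl A B C != 0 -> ~ on_sidelines A B C S ->
  isogonal_conjugate A B C S S' -> vsub S T = (s * v.1, s * v.2) ->
  [/\ sig (cx A B C T) (cy A B C T) (vx A B C v) (vy A B C v)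
        (dot (vsub B A) (vsub B A)) (dot (vsub B A) (vsub C A)) (dot (vsub C A) (vsub C A)) s != 0,
      cx A B C S' * sig (cx A B C T) (cy A B C T) (vx A B C v) (vy A B C v)
        (dot (vsub B A) (vsub B A)) (dot (vsub B A) (vsub C A)) (dot (vsub C A) (vsub C A)) s
      = Q2 (cx A B C T) (cy A B C T) (vx A B C v) (vy A B C v)
        (dot (vsub C A) (vsub C A)) s &
      cy A B C S' * sig (cx A B C T) (cy A B C T) (vx A B C v) (vy A B C v)
        (dot (vsub B A) (vsub B A)) (dot (vsub B A) (vsub C A)) (dot (vsub C A) (vsub C A)) s
      = Q3 (cx A B C T) (cy A B C T) (vx A B C v) (vy A B C v)
        (dot (vsub B A) (vsub B A)) s].
Proof.
move=> hD hs hi hv.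
have [e1 e2] := coords_shift hD hv.
have [h1 h2 h3] := conj_coords hD hs hi.
move: h1 h2 h3; rewrite e1 e2 (a2_eq A).
set sg := (X in X != 0 -> _).
have -> : sg = sig (cx A B C T) (cy A B C T) (vx A B C v) (vy A B C v)
        (dot (vsub B A) (vsub B A)) (dot (vsub B A) (vsub C A)) (dot (vsub C A) (vsub C A)) s.
  by rewrite /sg /sig /Q1 /Q2 /Q3 /a2 /T1 /v1; ring.
move=> h1 h2 h3; split => //.
  apply: (etrans _ (etrans h2 _)); rewrite /sg /sig /Q1 /Q2 /Q3 /a2 /T1 /v1; ring.
apply: (etrans _ (etrans h3 _)); rewrite /sg /sig /Q1 /Q2 /Q3 /a2 /T1 /v1; ring.
Qed.

End Geo2.


Section Geo3.
Variable R : rcfType.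
Implicit Types A B C P Q O T S v : pt R.

Lemma line_param P0 v S T : v <> (0, 0) -> on_line P0 v S -> on_line P0 v T ->
  exists s, vsub S T = (s * v.1, s * v.2).
Proof.
move=> hv; have hvv : dot v v != 0 by apply/eqP => /dot0.
move: hvv; case: v hv => w1 w2 hv.
case: P0 => p1 p2; case: S => x1 x2; case: T => t1 t2.
rewrite /on_line /cross /vsub /dot /= => hvv hS hT.
have hc : (x1 - t1) * w2 - (x2 - t2) * w1 = 0.
  have -> : (x1 - t1) * w2 - (x2 - t2) * w1 =
    ((x1 - p1) * w2 - (x2 - p2) * w1) - ((t1 - p1) * w2 - (t2 - p2) * w1) by ring.
  by rewrite hS hT subrr.
exists (((x1 - t1) * w1 + (x2 - t2) * w2) / (w1 * w1 + w2 * w2)).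
congr pair; apply/eqP; rewrite -subr_eq0; apply/eqP.
  have -> : x1 - t1 - ((x1 - t1) * w1 + (x2 - t2) * w2) / (w1 * w1 + w2 * w2) * w1
    = w2 * ((x1 - t1) * w2 - (x2 - t2) * w1) / (w1 * w1 + w2 * w2).
    by field; rewrite ?hvv.
  by rewrite hc mulr0 mul0r.
have -> : x2 - t2 - ((x1 - t1) * w1 + (x2 - t2) * w2) / (w1 * w1 + w2 * w2) * w2
  = - w1 * ((x1 - t1) * w2 - (x2 - t2) * w1) / (w1 * w1 + w2 * w2).
  by field; rewrite ?hvv.
by rewrite hc mulr0 mul0r.
Qed.

Lemma dot_shift S T v s : vsub S T = (s * v.1, s * v.2) ->
  dot (vsub T S) (vsub T S) = s ^+ 2 * dot v v.
Proof.
case: S => x1 x2; case: T => t1 t2; case: v => w1 w2; rewrite /vsub /dot /= => -[e1 e2].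
have h1 : x1 = t1 + s * w1 by rewrite -e1; ring.
have h2 : x2 = t2 + s * w2 by rewrite -e2; ring.
by subst x1 x2; ring.
Qed.

Lemma dot_ge0 (u : pt R) : 0 <= dot u u.
Proof. by case: u => u1 u2; rewrite /dot /= -!expr2 addr_ge0 ?sqr_ge0. Qed.

Lemma dist_sq P Q P' Q' : dist P Q = dist P' Q' ->
  dot (vsub P Q) (vsub P Q) = dot (vsub P' Q') (vsub P' Q').
Proof.
rewrite /dist /vnorm => h.
by rewrite -(sqr_sqrtr (dot_ge0 (vsub P Q))) h sqr_sqrtr // dot_ge0.
Qed.

Lemma K_ident A B C O T v : Dl A B C != 0 ->
  Kc (cx A B C T) (cy A B C T) (vx A B C v) (vy A B C v)
     (dot (vsub B A) (vsub B A)) (dot (vsub B A) (vsub C A)) (dot (vsub C A) (vsub C A))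
  = 2 * dot (vsub O T) v
    - vx A B C v * (dot (vsub O A) (vsub O A) - dot (vsub O B) (vsub O B))
    - vy A B C v * (dot (vsub O A) (vsub O A) - dot (vsub O C) (vsub O C)).
Proof.
case: A => a1 a2; case: B => b1 b2; case: C => c1 c2; case: O => o1 o2;
  case: T => t1 t2; case: v => w1 w2.
rewrite /Kc /cx /cy /vx /vy /Dl /cross /vsub /dot /= => hD.
by field; rewrite ?hD.
Qed.

Lemma d_cross A B C d1 d2 :
  cross (d1 * (vsub B A).1 + d2 * (vsub C A).1, d1 * (vsub B A).2 + d2 * (vsub C A).2)
        (vsub C A) = d1 * Dl A B C /\
  cross (vsub B A)
        (d1 * (vsub B A).1 + d2 * (vsub C A).1, d1 * (vsub B A).2 + d2 * (vsub C A).2)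
    = d2 * Dl A B C.
Proof.
case: A => a1 a2; case: B => b1 b2; case: C => c1 c2.
by rewrite /Dl /cross /vsub /=; split; ring.
Qed.

End Geo3.


Theorem proposition3p2 (R : rcfType) (A B C O P0 v T : pt R) :
  triangle A B C -> circumcenter A B C O ->
  v <> (0, 0) ->
  on_line P0 v T -> dot (vsub O T) v = 0 ->
  exists d : pt R, d <> (0, 0) /\
    forall S Rp S' Rp' : pt R,
      on_line P0 v S -> on_line P0 v Rp -> dist T S = dist T Rp ->
      ~ on_sidelines A B C S -> ~ on_sidelines A B C Rp ->
      isogonal_conjugate A B C S S' -> isogonal_conjugate A B C Rp Rp' ->
      S' <> Rp' ->
      cross (vsub S' Rp') d = 0.
Proof.
move=> tri circ vnz Tl hOT.
have hD : Dl A B C != 0 by apply/eqP.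
have [cOA cOB] := circ.
have e1 := dist_sq cOA; have e2 := dist_sq cOB.
have hK : Kc (cx A B C T) (cy A B C T) (vx A B C v) (vy A B C v)
     (dot (vsub B A) (vsub B A)) (dot (vsub B A) (vsub C A)) (dot (vsub C A) (vsub C A)) = 0.
  by rewrite (@K_ident _ A B C O T v hD) hOT e1 e2; ring.
have [d1 [d2 [hdnz hgood]]] := delta_exists hK.
exists (d1 * (vsub B A).1 + d2 * (vsub C A).1, d1 * (vsub B A).2 + d2 * (vsub C A).2); split.
  move=> h0; have [c1 c2] := @d_cross _ A B C d1 d2.
  move: c1 c2; rewrite h0 /cross /= !mul0r !mulr0 subrr => /esym/eqP c1 /esym/eqP c2.
  rewrite mulf_eq0 (negbTE hD) orbF in c1; rewrite mulf_eq0 (negbTE hD) orbF in c2.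
  by move: hdnz; rewrite (eqP c1) (eqP c2) eqxx.
move=> S Rp S' Rp' hS hR hdist nsS nsR isoS isoR neq.
have [s hs] := line_param vnz hS Tl.
have [r hr] := line_param vnz hR Tl.
have hsr : s ^+ 2 = r ^+ 2.
  have := dist_sq hdist; rewrite (dot_shift hs) (dot_shift hr) => h.
  have hvv : dot v v != 0 by apply/eqP => /dot0.
  exact: (mulIf hvv).
have [sgS xS yS] := conj_param hD nsS isoS hs.
have [sgR xR yR] := conj_param hD nsR isoR hr.
have : (r - s) * (r + s) = 0 by rewrite -subr_sqr hsr subrr.
move/eqP; rewrite mulf_eq0 => /orP [hrs | hrs].
  have rs : r = s by apply/eqP; rewrite -subr_eq0.
  subst r; exfalso; apply: neq; apply: (eq_from_coords hD).
    by apply: (mulIf sgS); rewrite xS xR.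
  by apply: (mulIf sgS); rewrite yS yR.
have rs : r = - s by apply/eqP; rewrite -addr_eq0.
subst r.
rewrite (@cross_decomp _ A B C S' Rp' d1 d2 hD).
have := final_alg sgS sgR xS yS xR yR (hgood s).
by move=> ->; rewrite subrr mul0r.
Qed.
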